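(* Let $\beta>0$, $\rho>0$, $\xi>0$, let $f,c_i$ ($i\in\mathcal I=\{1,\dots,m\}$) be continuously differentiable, and let $z_k=(x_k,u_k)$, $H_k$ a symmetric $n\times n$ matrix, and $d_k^c\in\mathbb{R}^{n+m}$ given, with $d_k^c=0$ whenever $r_k=0$. Let $d_k=(d_{xk},d_{uk})$ be an optimal solution of $$\min_{d}\ \hat q_k(d)=\rho\nabla f_k^Td_x+\sum_{i}\frac{\rho\beta}{y_{ki}+\lambda_{ki}}(\nabla c_{ki}^Td_x+\rho d_{ui})+\tfrac12d_x^TH_kd_x+\tfrac12\sum_i\frac{\rho\beta}{(y_{ki}+\lambda_{ki})^2}(\nabla c_{ki}^Td_x+\rho d_{ui})^2\quad\text{s.t.}\quad R_k^Td=R_k^Td_k^c.$$ Let $\Phi_\xi'(z_k;d_k)$ denote the directional derivative of $z\mapsto\Phi_\xi(z;\beta,\rho)$ at $z_k$ along $d_k$. Then: (1) $\Phi'_\xi(z_k;d_k)\le\xi\Big(\rho\nabla f_k^Td_{xk}+\sum_i\frac{\rho\beta}{y_{ki}+\lambda_{ki}}(\nabla c_{ki}^Td_{xk}+\rho d_{uki})\Big)+\|r_k+R_k^Td_k\|-\|r_k\|$. (2) If $r_k=0$, then $\Phi'_\xi(z_k;d_k)\le-\tfrac12\xi\,d_k^TQ_kd_k$.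
   Context: Notation: $y_i(x,u;\beta,\rho)=\tfrac12[\sqrt{(c_i(x)+\rho u_i)^2+4\rho\beta}-(c_i(x)+\rho u_i)]$, $\lambda_i(x,u;\beta,\rho)=\tfrac12[\sqrt{(c_i(x)+\rho u_i)^2+4\rho\beta}+(c_i(x)+\rho u_i)]$; $y_{ki},\lambda_{ki}$ are their values at $(x_k,u_k)$; $c_{ki}=c_i(x_k)$, $\nabla c_{ki}=\nabla c_i(x_k)$, $\nabla f_k=\nabla f(x_k)$. The merit function is $\Phi_\xi(x,u;\beta,\rho)=\xi\rho f(x)-\xi\rho\beta\sum_i\ln y_i(x,u;\beta,\rho)+\|c(x)+y(x,u;\beta,\rho)\|$ (Euclidean norm). $r_k=c(x_k)+y(x_k,u_k;\beta,\rho)\in\mathbb{R}^m$. $R_k$ is the $(n+m)\times m$ matrix whose $i$th column is $\big(\tfrac{\lambda_{ki}}{y_{ki}+\lambda_{ki}}\nabla c_{ki};\,-\rho\tfrac{y_{ki}}{y_{ki}+\lambda_{ki}}e_i\big)$, $e_i$ the $i$th unit vector in $\mathbb{R}^m$. $Q_k$ is the symmetric matrix such that $d^TQ_kd=d_x^TH_kd_x+\sum_i\frac{\rho\beta}{(y_{ki}+\lambda_{ki})^2}(\nabla c_{ki}^Td_x+\rho d_{ui})^2$, namely $Q_k=\begin{pmatrix}H_k+\sum_i w_{ki}\nabla c_{ki}\nabla c_{ki}^T & G_k\\ G_k^T&\mathrm{diag}(\rho^2w_{ki})\end{pmatrix}$ with $w_{ki}=\rho\beta/(y_{ki}+\lambda_{ki})^2$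 and $G_k$ having columns $\rho w_{ki}\nabla c_{ki}$. *)

(* Defs.v *)
From Stdlib Require Import Reals.
From mathcomp Require Import ssreflect ssrfun ssrbool eqtype ssrnat seq fintype bigop.
Open Scope R_scope.
Set Implicit Arguments.
Unset Strict Implicit.

Definition dotv (n : nat) (a b : 'I_n -> R) : R :=
  \big[Rplus/R0]_(i < n) (a i * b i).
Definition normv (n : nat) (a : 'I_n -> R) : R := sqrt (dotv a a).

Definition has_gradient (n : nat) (f : ('I_n -> R) -> R) (g : 'I_n -> R)
    (x : 'I_n -> R) : Prop :=
  forall eps, 0 < eps -> exists delta, 0 < delta /\
    forall h : 'I_n -> R, normv h < delta ->
      Rabs (f (fun j => x j + h j) - f x - dotv g h) <= eps * normv h.

Definition C1_with_grad (n : nat) (f : ('I_n -> R) -> R)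
    (gf : ('I_n -> R) -> ('I_n -> R)) : Prop :=
  (forall x, has_gradient f (gf x) x) /\
  (forall x eps, 0 < eps -> exists delta, 0 < delta /\
     forall x', normv (fun j => x' j - x j) < delta ->
       normv (fun j => gf x' j - gf x j) < eps).

Definition yfun (n m : nat) (c : 'I_m -> ('I_n -> R) -> R) (beta rho : R)
    (x : 'I_n -> R) (u : 'I_m -> R) (i : 'I_m) : R :=
  (sqrt ((c i x + rho * u i) ^ 2 + 4 * rho * beta) - (c i x + rho * u i)) / 2.
Definition lamfun (n m : nat) (c : 'I_m -> ('I_n -> R) -> R) (beta rho : R)
    (x : 'I_n -> R) (u : 'I_m -> R) (i : 'I_m) : R :=
  (sqrt ((c i x + rho * u i) ^ 2 + 4 * rho * beta) + (c i x + rho * u i)) / 2.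

Definition Phi (n m : nat) (f : ('I_n -> R) -> R) (c : 'I_m -> ('I_n -> R) -> R)
    (xi beta rho : R) (x : 'I_n -> R) (u : 'I_m -> R) : R :=
  xi * rho * f x
  - xi * rho * beta * (\big[Rplus/R0]_(i < m) ln (yfun c beta rho x u i))
  + normv (fun i => c i x + yfun c beta rho x u i).

Definition rvec (n m : nat) (c : 'I_m -> ('I_n -> R) -> R) (beta rho : R)
    (x : 'I_n -> R) (u : 'I_m -> R) : 'I_m -> R :=
  fun i => c i x + yfun c beta rho x u i.

Definition RkT (n m : nat) (c : 'I_m -> ('I_n -> R) -> R)
    (gc : 'I_m -> ('I_n -> R) -> ('I_n -> R)) (beta rho : R)
    (x : 'I_n -> R) (u : 'I_m -> R) (dx : 'I_n -> R) (du : 'I_m -> R)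
    : 'I_m -> R :=
  fun i =>
    let y := yfun c beta rho x u i in
    let l := lamfun c beta rho x u i in
    l / (y + l) * dotv (gc i x) dx - rho * (y / (y + l)) * du i.

Definition quadH (n : nat) (H : 'I_n -> 'I_n -> R) (dx : 'I_n -> R) : R :=
  \big[Rplus/R0]_(i < n) \big[Rplus/R0]_(j < n) (dx i * H i j * dx j).

Definition linpart (n m : nat) (c : 'I_m -> ('I_n -> R) -> R)
    (gf : ('I_n -> R) -> ('I_n -> R))
    (gc : 'I_m -> ('I_n -> R) -> ('I_n -> R)) (beta rho : R)
    (x : 'I_n -> R) (u : 'I_m -> R) (dx : 'I_n -> R) (du : 'I_m -> R) : R :=
  rho * dotv (gf x) dx
  + \big[Rplus/R0]_(i < m)
      (rho * beta / (yfun c beta rho x u i + lamfun c beta rho x u i)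
       * (dotv (gc i x) dx + rho * du i)).

Definition quadQ (n m : nat) (c : 'I_m -> ('I_n -> R) -> R)
    (gc : 'I_m -> ('I_n -> R) -> ('I_n -> R)) (H : 'I_n -> 'I_n -> R)
    (beta rho : R) (x : 'I_n -> R) (u : 'I_m -> R)
    (dx : 'I_n -> R) (du : 'I_m -> R) : R :=
  quadH H dx
  + \big[Rplus/R0]_(i < m)
      (rho * beta / (yfun c beta rho x u i + lamfun c beta rho x u i) ^ 2
       * (dotv (gc i x) dx + rho * du i) ^ 2).

Definition qhat (n m : nat) (c : 'I_m -> ('I_n -> R) -> R)
    (gf : ('I_n -> R) -> ('I_n -> R))
    (gc : 'I_m -> ('I_n -> R) -> ('I_n -> R)) (H : 'I_n -> 'I_n -> R)
    (beta rho : R) (x : 'I_n -> R) (u : 'I_m -> R)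
    (dx : 'I_n -> R) (du : 'I_m -> R) : R :=
  linpart c gf gc beta rho x u dx du + / 2 * quadQ c gc H beta rho x u dx du.

Definition dir_deriv (n m : nat) (F : ('I_n -> R) -> ('I_m -> R) -> R)
    (x : 'I_n -> R) (u : 'I_m -> R) (dx : 'I_n -> R) (du : 'I_m -> R)
    (L : R) : Prop :=
  forall eps, 0 < eps -> exists delta, 0 < delta /\
    forall t, 0 < t < delta ->
      Rabs ((F (fun j => x j + t * dx j) (fun i => u i + t * du i) - F x u) / t
            - L) < eps.

(* Main.v *)
Require Import Defs.
From Stdlib Require Import Reals Lra Psatz FunctionalExtensionality Classical.
From mathcomp Require Import ssreflect ssrfun ssrbool eqtype ssrnat seq fintype bigop.
Open Scope R_scope.

Lemma bsum_add (I : Type) (r : seq I) (F G : I -> R) :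
  \big[Rplus/R0]_(i <- r) (F i + G i) =
  \big[Rplus/R0]_(i <- r) F i + \big[Rplus/R0]_(i <- r) G i.
Proof. elim: r => [|x r IH]; rewrite ?big_nil ?big_cons /=; [ring| rewrite IH; ring]. Qed.

Lemma bsum_scal (I : Type) (r : seq I) (k : R) (F : I -> R) :
  \big[Rplus/R0]_(i <- r) (k * F i) = k * \big[Rplus/R0]_(i <- r) F i.
Proof. elim: r => [|x r IH]; rewrite ?big_nil ?big_cons /=; [ring| rewrite IH; ring]. Qed.

Lemma bsum_ext (I : Type) (r : seq I) (F G : I -> R) :
  (forall i, F i = G i) ->
  \big[Rplus/R0]_(i <- r) F i = \big[Rplus/R0]_(i <- r) G i.
Proof. move=> H; elim: r => [|x r IH]; rewrite ?big_nil ?big_cons /=; [ring| rewrite IH H; ring]. Qed.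

Lemma bsum_0 (I : Type) (r : seq I) (F : I -> R) :
  (forall i, F i = 0) -> \big[Rplus/R0]_(i <- r) F i = 0.
Proof. move=> H; elim: r => [|x r IH]; rewrite ?big_nil ?big_cons /=; [ring| rewrite IH H; ring]. Qed.

Lemma bsum_ge0 (I : Type) (r : seq I) (F : I -> R) :
  (forall i, 0 <= F i) -> 0 <= \big[Rplus/R0]_(i <- r) F i.
Proof. move=> H; elim: r => [|x r IH]; rewrite ?big_nil ?big_cons /=; [lra| have := H x; lra]. Qed.

Arguments bsum_ge0 {I} r F.
Lemma bsum_ge_term (I : eqType) (r : seq I) (F : I -> R) (j : I) :
  (forall i, 0 <= F i) -> j \in r -> F j <= \big[Rplus/R0]_(i <- r) F i.
Proof.
move=> H; elim: r => [|x r IH] //; rewrite big_cons /= in_cons => /orP [/eqP ->|Hj].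
- have := bsum_ge0 r F H; lra.
- have := IH Hj; have := H x; lra.
Qed.

Lemma dotv_ge0 n (a : 'I_n -> R) : 0 <= dotv a a.
Proof. apply: bsum_ge0 => i; nra. Qed.

Lemma normv_ge0 n (a : 'I_n -> R) : 0 <= normv a.
Proof. apply: sqrt_pos. Qed.

Lemma dotv_scal n (a b : 'I_n -> R) (h : R) :
  dotv a (fun j => h * b j) = h * dotv a b.
Proof. rewrite /dotv -bsum_scal; apply: bsum_ext => i; ring. Qed.

Lemma normv_scal n (d : 'I_n -> R) (h : R) :
  normv (fun j => h * d j) = Rabs h * normv d.
Proof.
rewrite /normv /dotv.
rewrite (@bsum_ext _ _ _ (fun i => (h * h) * (d i * d i))); last by move=> i; ring.
rewrite bsum_scal sqrt_mult_alt; last by nra.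
by rewrite -[h * h]/(Rsqr h) sqrt_Rsqr_abs.
Qed.

Lemma cs n (p q : 'I_n -> R) : dotv p q <= normv p * normv q.
Proof.
have key : forall mu nu, 0 <= nu^2 * dotv p p - 2 * mu * nu * dotv p q + mu^2 * dotv q q.
  move=> mu nu.
  have -> : nu^2 * dotv p p - 2 * mu * nu * dotv p q + mu^2 * dotv q q
     = dotv (fun i => nu * p i - mu * q i) (fun i => nu * p i - mu * q i).
    rewrite /dotv (@bsum_ext _ _ (fun i => (nu * p i - mu * q i) * (nu * p i - mu * q i)) (fun i => nu ^ 2 * (p i * p i) + - (2 * mu * nu) * (p i * q i) + mu ^ 2 * (q i * q i))); last by move=> i; ring.
    rewrite !bsum_add !bsum_scal. set A := \big[Rplus/R0]_(i < n) (p i * p i); set B := \big[Rplus/R0]_(i < n) (p i * q i); set D := \big[Rplus/R0]_(i < n) (q i * q i); ring.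
  exact: dotv_ge0.
set P := dotv p p in key *; set Q := dotv q q in key *; set C := dotv p q in key *.
have HP : 0 <= P by apply: dotv_ge0.
have HQ : 0 <= Q by apply: dotv_ge0.
have C2 : C * C <= P * Q.
  have k1 := key C Q. have k2 := key P C. have k3 := key C 1.
  destruct (Rle_lt_or_eq_dec 0 Q HQ) as [Qp|Q0].
  - nra.
  - destruct (Rle_lt_or_eq_dec 0 P HP) as [Pp|P0].
    + nra.
    + rewrite -Q0 -P0 in k3 *; nra.
destruct (Rle_or_lt C 0) as [Cn|Cp].
- have := normv_ge0 _ p; have := normv_ge0 _ q; nra.
- rewrite /normv -/P -/Q -sqrt_mult_alt //.
  rewrite -(sqrt_square C); last lra.
  by apply: sqrt_le_1_alt.
Qed.

Lemma dpl_eql f x l l' : l = l' -> derivable_pt_lim f x l -> derivable_pt_lim f x l'.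
Proof. by move=> ->. Qed.
Lemma dpl_plus f g x a b : derivable_pt_lim f x a -> derivable_pt_lim g x b ->
  derivable_pt_lim (fun t => f t + g t) x (a + b).
Proof. exact: derivable_pt_lim_plus. Qed.
Lemma dpl_minus f g x a b : derivable_pt_lim f x a -> derivable_pt_lim g x b ->
  derivable_pt_lim (fun t => f t - g t) x (a - b).
Proof. exact: derivable_pt_lim_minus. Qed.
Lemma dpl_mult f g x a b u v : derivable_pt_lim f x a -> derivable_pt_lim g x b ->
  f x = u -> g x = v ->
  derivable_pt_lim (fun t => f t * g t) x (a * v + u * b).
Proof. move=> Hf Hg <- <-; exact: derivable_pt_lim_mult. Qed.
Lemma dpl_const k x : derivable_pt_lim (fun _ => k) x 0.
Proof. exact: derivable_pt_lim_const. Qed.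
Lemma dpl_scal k f x a : derivable_pt_lim f x a ->
  derivable_pt_lim (fun t => k * f t) x (k * a).
Proof. move=> H; apply: (dpl_eql _ _ (0 * f x + k * a)); first ring.
  apply: dpl_mult => //; exact: dpl_const. Qed.
Lemma dpl_comp f g x v a b : derivable_pt_lim f x a -> f x = v ->
  derivable_pt_lim g v b -> derivable_pt_lim (fun t => g (f t)) x (b * a).
Proof. move=> Hf Hv Hg; subst v; exact: (derivable_pt_lim_comp f g x a b Hf Hg). Qed.
Lemma dpl_lin u k x : derivable_pt_lim (fun t => u + t * k) x k.
Proof. apply: (dpl_eql _ _ (0 + (1 * k + x * 0))); first ring.
  apply: dpl_plus; first exact: dpl_const.
  apply: dpl_mult => //; [exact (derivable_pt_lim_id x)| exact: dpl_const]. Qed.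

Lemma dpl_ext f g x l : (forall t, f t = g t) ->
  derivable_pt_lim f x l -> derivable_pt_lim g x l.
Proof. move=> H; have -> : g = f by apply: functional_extensionality => t; rewrite H. done. Qed.

Lemma dpl_bsum (I : Type) (r : seq I) (G : I -> R -> R) (l : I -> R) x :
  (forall i, derivable_pt_lim (G i) x (l i)) ->
  derivable_pt_lim (fun t => \big[Rplus/R0]_(i <- r) G i t) x (\big[Rplus/R0]_(i <- r) l i).
Proof.
move=> H; elim: r => [|y r IH].
- rewrite big_nil; apply: (dpl_ext (fun _ => 0)); last exact: dpl_const.
  by move=> t; rewrite big_nil.
- rewrite big_cons /=.
  apply: (dpl_ext (fun t => G y t + \big[Rplus/R0]_(i <- r) G i t)).
    by move=> t; rewrite big_cons.
  exact: dpl_plus.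
Qed.

Lemma cont_ext f g x : (forall t, f t = g t) -> continuity_pt f x -> continuity_pt g x.
Proof. move=> H; have -> : g = f by apply: functional_extensionality => t; rewrite H. done. Qed.

Lemma cont_bsum (I : Type) (r : seq I) (G : I -> R -> R) x :
  (forall i, continuity_pt (G i) x) ->
  continuity_pt (fun t => \big[Rplus/R0]_(i <- r) G i t) x.
Proof.
move=> H; elim: r => [|y r IH].
- apply: (cont_ext (fun _ => 0)); first by move=> t; rewrite big_nil.
  by apply: continuity_pt_const => a b.
- apply: (cont_ext (fun t => G y t + \big[Rplus/R0]_(i <- r) G i t)).
    by move=> t; rewrite big_cons.
  exact: continuity_pt_plus.
Qed.

Lemma line_grad n (g : ('I_n -> R) -> R) G x d : has_gradient g G x ->
  derivable_pt_lim (fun t => g (fun j => x j + t * d j)) 0 (dotv G d).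
Proof.
move=> Hg eps Heps.
set M := normv d + 1.
have HM : 0 < M by have := normv_ge0 _ d; rewrite /M; lra.
have He2 : 0 < eps / (2 * M) by apply: Rdiv_lt_0_compat; lra.
case: (Hg _ He2) => del [Hdel Hh].
have Hdm : 0 < del / M by apply: Rdiv_lt_0_compat.
exists (mkposreal _ Hdm) => h Hh0 /= Hhd.
have E0 : (fun j => x j + 0 * d j) = x by apply: functional_extensionality => j; ring.
rewrite E0 Rplus_0_l.
have Hn : normv (fun j => h * d j) < del.
  rewrite normv_scal.
  have := normv_ge0 _ d; move=> Hd.
  have : Rabs h * M < del.
    have := Rmult_lt_compat_r M _ _ HM Hhd. have -> : del / M * M = del by field; lra. done.
  rewrite /M; nra.
have := Hh _ Hn; rewrite dotv_scal normv_scal => Hb.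
have Hah : 0 < Rabs h by apply: Rabs_pos_lt.
set A := g (fun j => x j + h * d j) - g x - h * dotv G d in Hb.
have -> : (g (fun j => x j + h * d j) - g x) / h - dotv G d = A / h.
  rewrite /A; field; exact: Hh0.
rewrite /Rdiv Rabs_mult Rabs_inv.
apply: (Rmult_lt_reg_r (Rabs h)) => //.
rewrite Rmult_assoc Rinv_l; last lra.
have Hd := normv_ge0 _ d.
have : eps / (2 * M) * (Rabs h * normv d) <= eps / 2 * Rabs h.
  have -> : eps / (2 * M) * (Rabs h * normv d) = eps / 2 * Rabs h * (normv d / M).
    by field; lra.
  have : normv d / M <= 1.
    apply: (Rmult_le_reg_r M) => //. rewrite /Rdiv Rmult_assoc Rinv_l; last lra. rewrite /M; lra.
  have : 0 <= eps / 2 * Rabs h by nra.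
  nra.
nra.
Qed.

Definition hf K s := (sqrt (s ^ 2 + K) - s) / 2.

Lemma sqK_pos K s : 0 < K -> 0 < sqrt (s ^ 2 + K).
Proof. move=> HK; apply: sqrt_lt_R0; nra. Qed.

Lemma hf_pos K s : 0 < K -> 0 < hf K s.
Proof.
move=> HK; rewrite /hf.
have Hq := sqrt_sqrt (s ^ 2 + K) ltac:(nra).
have Hp := sqK_pos K s HK.
set q := sqrt (s ^ 2 + K) in Hq Hp *.
nra.
Qed.

Lemma hf_der K s : 0 < K ->
  derivable_pt_lim (hf K) s (- hf K s / sqrt (s ^ 2 + K)).
Proof.
move=> HK.
have Hp := sqK_pos K s HK.
have H1 : derivable_pt_lim (fun t => sqrt (t ^ 2 + K)) s
            (/ (2 * sqrt (s ^ 2 + K)) * (INR 2 * s ^ Init.Nat.pred 2 + 0)).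
  apply: (dpl_comp (fun t => t ^ 2 + K) sqrt s (s ^ 2 + K)) => //.
    apply: dpl_plus; [exact: derivable_pt_lim_pow| exact: dpl_const].
  apply: derivable_pt_lim_sqrt; nra.
apply: (dpl_ext (fun t => / 2 * (sqrt (t ^ 2 + K) - t))).
  by move=> t; rewrite /hf; field.
apply: dpl_eql; last first.
  apply: dpl_scal; apply: dpl_minus; [exact: H1| exact: (derivable_pt_lim_id s)].
rewrite /hf /=. field. rewrite -[s * (s * 1)]/(s ^ 2); lra.
Qed.

Lemma cont_quot (rf : R -> R) a : derivable_pt_lim rf 0 a -> rf 0 = 0 ->
  continuity_pt (fun t => if Req_EM_T t 0 then a else rf t / t) 0.
Proof.
move=> Hd H0 eps Heps.
case: (Hd eps Heps) => del Hdel.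
exists del; split; first exact: cond_pos.
move=> x [[_ Hx] Hdx].
rewrite /= /R_dist in Hdx *.
destruct (Req_EM_T x 0) as [E|Hne]; first by exfalso; apply: Hx; rewrite E.
destruct (Req_EM_T 0 0) as [E0|C]; last by exfalso; apply: C.
have := Hdel x ltac:(by move=> E; apply: Hx; rewrite E) ltac:(by rewrite Rminus_0_r in Hdx).
by rewrite Rplus_0_l H0 Rminus_0_r.
Qed.

Lemma normv_ratio m (rf : 'I_m -> R -> R) (a : 'I_m -> R) :
  (forall i, derivable_pt_lim (rf i) 0 (a i)) -> (forall i, rf i 0 = 0) ->
  forall eps, 0 < eps -> exists delta, 0 < delta /\ forall t, 0 < t < delta ->
    Rabs ((normv (fun i => rf i t) - 0) / t - normv a) < eps.
Proof.
move=> Hd H0.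
pose q i t := if Req_EM_T t 0 then a i else rf i t / t.
have Hq : forall i, continuity_pt (q i) 0 by move=> i; apply: cont_quot.
pose G t := sqrt (\big[Rplus/R0]_(i < m) (q i t * q i t)).
have HG : continuity_pt G 0.
  apply: (cont_ext (comp sqrt (fun t => \big[Rplus/R0]_(i < m) (q i t * q i t)))) => //.
  apply: continuity_pt_comp.
    apply: cont_bsum => i; exact: continuity_pt_mult.
  apply: continuity_pt_sqrt; apply: bsum_ge0 => i; nra.
have G0 : G 0 = normv a.
  rewrite /G /normv /dotv; f_equal; apply: bsum_ext => i.
  rewrite /q; destruct (Req_EM_T 0 0) as [E0|C] => //; by exfalso; apply: C.
have Gt : forall t, 0 < t -> (normv (fun i => rf i t) - 0) / t = G t.
  move=> t Ht.
  rewrite /G /normv /dotv.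
  rewrite (@bsum_ext _ _ (fun i => q i t * q i t) (fun i => / (t * t) * (rf i t * rf i t))); last first.
    move=> i; rewrite /q; destruct (Req_EM_T t 0) as [E|Hne]; first lra.
    rewrite /=; field; lra.
  rewrite bsum_scal sqrt_mult_alt; last first.
    apply: Rlt_le; apply: Rinv_0_lt_compat; nra.
  rewrite sqrt_inv sqrt_square; last lra.
  set S := sqrt (\big[Rplus/R0]_(i < m) _); field; lra.
move=> eps Heps.
case: (HG eps Heps) => alp [Halp Hc].
exists alp; split => // t [Ht Hta].
rewrite Gt // -G0.
apply: (Hc t); split; first by split => //; lra.
rewrite /= /R_dist Rminus_0_r Rabs_right; lra.
Qed.

Definition rdN (N : R -> R) (n0 L : R) : Prop :=
  forall eps, 0 < eps -> exists delta, 0 < delta /\ forall t, 0 < t < delta ->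
    Rabs ((N t - n0) / t - L) < eps.

Lemma rd_of_dpl N n0 L : derivable_pt_lim N 0 L -> N 0 = n0 -> rdN N n0 L.
Proof.
move=> Hd <- eps Heps.
case: (Hd eps Heps) => del Hdel.
exists del; split; first exact: cond_pos.
move=> t [Ht Htd].
have := Hdel t ltac:(lra) ltac:(rewrite Rabs_right; lra).
by rewrite Rplus_0_l.
Qed.

Lemma rd_combine (Sm Nt : R -> R) s0 n0 Ls Ln :
  derivable_pt_lim Sm 0 Ls -> Sm 0 = s0 -> rdN Nt n0 Ln ->
  forall eps, 0 < eps -> exists delta, 0 < delta /\ forall t, 0 < t < delta ->
    Rabs ((Sm t + Nt t - (s0 + n0)) / t - (Ls + Ln)) < eps.
Proof.
move=> HS HS0 HN eps Heps.
have He2 : 0 < eps / 2 by lra.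
case: (rd_of_dpl _ _ _ HS HS0 _ He2) => d1 [Hd1 H1].
case: (HN _ He2) => d2 [Hd2 H2].
exists (Rmin d1 d2); split; first by apply: Rmin_glb_lt.
move=> t [Ht Htd].
have Ht1 : t < d1 by have := Rmin_l d1 d2; lra.
have Ht2 : t < d2 by have := Rmin_r d1 d2; lra.
have := H1 t (conj Ht Ht1); have := H2 t (conj Ht Ht2).
have -> : (Sm t + Nt t - (s0 + n0)) / t - (Ls + Ln)
   = ((Sm t - s0) / t - Ls) + ((Nt t - n0) / t - Ln) by field; lra.
move=> A B; apply: (Rle_lt_trans _ _ _ (Rabs_triang _ _)); lra.
Qed.

Theorem lemma3p2 (n m : nat) (beta rho xi : R)
    (f : ('I_n -> R) -> R) (gf : ('I_n -> R) -> ('I_n -> R))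
    (c : 'I_m -> ('I_n -> R) -> R) (gc : 'I_m -> ('I_n -> R) -> ('I_n -> R))
    (xk : 'I_n -> R) (uk : 'I_m -> R) (H : 'I_n -> 'I_n -> R)
    (dcx : 'I_n -> R) (dcu : 'I_m -> R) (dx : 'I_n -> R) (du : 'I_m -> R) :
  0 < beta -> 0 < rho -> 0 < xi ->
  C1_with_grad f gf ->
  (forall i, C1_with_grad (c i) (gc i)) ->
  (forall i j, H i j = H j i) ->
  ((forall i, rvec c beta rho xk uk i = 0) ->
     (forall j, dcx j = 0) /\ (forall i, dcu i = 0)) ->
  (* d_k = (dx,du) is an optimal solution of the QP *)
  (forall i, RkT c gc beta rho xk uk dx du i = RkT c gc beta rho xk uk dcx dcu i) ->
  (forall (ex : 'I_n -> R) (eu : 'I_m -> R),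
     (forall i, RkT c gc beta rho xk uk ex eu i = RkT c gc beta rho xk uk dcx dcu i) ->
     qhat c gf gc H beta rho xk uk dx du <= qhat c gf gc H beta rho xk uk ex eu) ->
  exists L : R,
    dir_deriv (Phi f c xi beta rho) xk uk dx du L /\
    L <= xi * linpart c gf gc beta rho xk uk dx du
         + normv (fun i => rvec c beta rho xk uk i + RkT c gc beta rho xk uk dx du i)
         - normv (rvec c beta rho xk uk) /\
    ((forall i, rvec c beta rho xk uk i = 0) ->
       L <= - (/ 2) * xi * quadQ c gc H beta rho xk uk dx du).
Proof.
move=> Hb Hr Hx HCf HCc _ Hdc Hfeas Hopt.
have HK : 0 < 4 * rho * beta by nra.
have E0 : (fun j => xk j + 0 * dx j) = xk by apply: functional_extensionality => j; ring.
pose S i t := c i (fun j => xk j + t * dx j) + rho * (uk i + t * du i).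
pose s0 i := c i xk + rho * uk i.
pose sq i := sqrt (s0 i ^ 2 + 4 * rho * beta).
pose ds i := dotv (gc i xk) dx + rho * du i.
have Hsq : forall i, 0 < sq i by move=> i; apply: sqK_pos.
have HS : forall i, derivable_pt_lim (S i) 0 (ds i).
  move=> i; apply: dpl_plus; first exact: line_grad (proj1 (HCc i) xk).
  apply: dpl_scal; exact: dpl_lin.
have HS0 : forall i, S i 0 = s0 i.
  by move=> i; rewrite /S /s0 E0 Rmult_0_l Rplus_0_r.
have Hy : forall i, derivable_pt_lim (fun t => hf (4 * rho * beta) (S i t)) 0
                    (- hf (4 * rho * beta) (s0 i) / sq i * ds i).
  move=> i; apply: (dpl_comp (S i) (hf (4 * rho * beta)) 0 (s0 i)) => //.
  exact: hf_der.
have Hln : forall i, derivable_pt_lim (fun t => ln (hf (4 * rho * beta) (S i t))) 0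
       (/ hf (4 * rho * beta) (s0 i) * (- hf (4 * rho * beta) (s0 i) / sq i * ds i)).
  move=> i; apply: (dpl_comp (fun t => hf (4 * rho * beta) (S i t)) ln 0 (hf (4 * rho * beta) (s0 i))) => //.
    by rewrite HS0.
  apply: derivable_pt_lim_ln; exact: hf_pos.
pose a := RkT c gc beta rho xk uk dx du.
pose rv := rvec c beta rho xk uk.
pose rf i t := c i (fun j => xk j + t * dx j) + hf (4 * rho * beta) (S i t).
have Hrd : forall i, derivable_pt_lim (rf i) 0 (a i).
  move=> i; apply: dpl_eql; last first.
    apply: dpl_plus; [exact: line_grad (proj1 (HCc i) xk)| exact: Hy].
  have := Hsq i.
  rewrite /a /RkT /yfun /lamfun /hf /ds /sq /s0.
  set q := sqrt _.
  move=> Hq; field; lra.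
have Hrv : forall i, rf i 0 = rv i.
  by move=> i; rewrite /rf HS0 E0.
pose Sm t := xi * rho * f (fun j => xk j + t * dx j)
   - xi * rho * beta * \big[Rplus/R0]_(i < m) ln (hf (4 * rho * beta) (S i t)).
pose Ls := xi * rho * dotv (gf xk) dx - xi * rho * beta *
   \big[Rplus/R0]_(i < m) (/ hf (4 * rho * beta) (s0 i) * (- hf (4 * rho * beta) (s0 i) / sq i * ds i)).
have HSm : derivable_pt_lim Sm 0 Ls.
  apply: dpl_minus; apply: dpl_scal; first exact: line_grad (proj1 HCf xk).
  exact: dpl_bsum.
have HSm0 : Sm 0 = xi * rho * f xk - xi * rho * beta * \big[Rplus/R0]_(i < m) ln (yfun c beta rho xk uk i).
  rewrite /Sm E0; do 2 f_equal.
  by apply: bsum_ext => i; rewrite HS0.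
have Hlin : Ls = xi * linpart c gf gc beta rho xk uk dx du.
  rewrite /Ls /linpart.
  rewrite (@bsum_ext _ _ (fun i => rho * beta / (yfun c beta rho xk uk i + lamfun c beta rho xk uk i) *
      (dotv (gc i xk) dx + rho * du i)) (fun i => - (rho * beta) * (/ hf (4 * rho * beta) (s0 i) * (- hf (4 * rho * beta) (s0 i) / sq i * ds i)))); last first.
    move=> i; have := Hsq i; have := hf_pos _ (s0 i) HK.
    rewrite /yfun /lamfun /hf /ds /sq /s0.
    set q := sqrt _.
    move=> Hh Hq; field; lra.
  rewrite bsum_scal.
  set A := \big[Rplus/R0]_(i < m) _.
  ring.
have Hinner : derivable_pt_lim (fun t => \big[Rplus/R0]_(i < m) (rf i t * rf i t)) 0
    (\big[Rplus/R0]_(i < m) (a i * rv i + rv i * a i)).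
  by apply: dpl_bsum => i; apply: dpl_mult.
pose D := dotv rv rv.
have HD0 : \big[Rplus/R0]_(i < m) (rf i 0 * rf i 0) = D.
  by rewrite /D /dotv; apply: bsum_ext => i; rewrite Hrv.
case: (classic (forall i, rv i = 0)) => Hz.
-
  have Nrv : normv rv = 0.
    rewrite /normv /dotv bsum_0 ?sqrt_0 // => i; rewrite Hz; ring.
  have Nq : normv (fun i => rv i + a i) = normv a.
    rewrite /normv /dotv; f_equal; apply: bsum_ext => i; rewrite Hz; ring.
  have Hrf0 : forall i, rf i 0 = 0 by move=> i; rewrite Hrv Hz.
  exists (Ls + (normv (fun i => rv i + a i) - normv rv)).
  split.
    have HN : rdN (fun t => normv (fun i => rf i t)) (normv rv) (normv (fun i => rv i + a i) - normv rv).
      rewrite Nrv Nq Rminus_0_r.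
      exact: (normv_ratio _ rf a Hrd Hrf0).
    exact: (rd_combine Sm (fun t => normv (fun i => rf i t)) _ (normv rv) Ls _ HSm HSm0 HN).
  split.
    rewrite -/rv -/a -Hlin; lra.
  move=> _.
  case: (Hdc Hz) => Hdx Hdu.
  have Hdc0 : forall i, RkT c gc beta rho xk uk dcx dcu i = 0.
    move=> i; rewrite /RkT Hdu.
    have -> : dotv (gc i xk) dcx = 0.
      by rewrite /dotv bsum_0 // => j; rewrite Hdx; ring.
    ring.
  have Ha0 : forall i, a i = 0 by move=> i; rewrite /a Hfeas Hdc0.
  have Nq0 : normv a = 0.
    rewrite /normv /dotv bsum_0 ?sqrt_0 // => i; rewrite Ha0; ring.
  have Hq := Hopt (fun _ => 0) (fun _ => 0).
  have Hfz : forall i, RkT c gc beta rho xk uk (fun _ => 0) (fun _ => 0) i = RkT c gc beta rho xk uk dcx dcu i.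
    move=> i; rewrite Hdc0 /RkT.
    have -> : dotv (gc i xk) (fun _ => 0) = 0.
      by rewrite /dotv bsum_0 // => j; ring.
    ring.
  have := Hq Hfz.
  have -> : qhat c gf gc H beta rho xk uk (fun _ => 0) (fun _ => 0) = 0.
    rewrite /qhat /linpart /quadQ /quadH.
    have -> : dotv (gf xk) (fun _ => 0) = 0 by rewrite /dotv bsum_0 // => j; ring.
    rewrite (@bsum_0 _ _ (fun i => _ * (dotv (gc i xk) (fun _ => 0) + rho * 0))); last first.
      move=> i; have -> : dotv (gc i xk) (fun _ => 0) = 0 by rewrite /dotv bsum_0 // => j; ring.
      ring.
    rewrite (@bsum_0 _ _ (fun i => _ * (dotv (gc i xk) (fun _ => 0) + rho * 0) ^ 2)); last first.
      move=> i; have -> : dotv (gc i xk) (fun _ => 0) = 0 by rewrite /dotv bsum_0 // => j; ring.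
      ring.
    rewrite bsum_0; last first.
      move=> i; rewrite bsum_0 // => j; ring.
    ring.
  rewrite /qhat Nq Nq0 Hlin.
  move=> Hle; nra.
-
  have HDp : 0 < D.
    case: (not_all_ex_not _ _ Hz) => j Hj.
    have := @bsum_ge_term _ (index_enum 'I_m) (fun i => rv i * rv i) j ltac:(move=> i /=; nra) (mem_index_enum j).
    have : 0 < rv j * rv j by nra.
    move=> H1 H2; rewrite /D /dotv; simpl in H2.
exact: (Rlt_le_trans _ _ _ H1 H2).
  have HN : derivable_pt_lim (fun t => sqrt (\big[Rplus/R0]_(i < m) (rf i t * rf i t))) 0
      (/ (2 * sqrt D) * \big[Rplus/R0]_(i < m) (a i * rv i + rv i * a i)).
    apply: (dpl_comp _ sqrt 0 D) => //.
    exact: derivable_pt_lim_sqrt.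
  exists (Ls + / (2 * sqrt D) * \big[Rplus/R0]_(i < m) (a i * rv i + rv i * a i)).
  split.
    have HN0 : sqrt (\big[Rplus/R0]_(i < m) (rf i 0 * rf i 0)) = normv rv by rewrite HD0.
    exact: (rd_combine Sm (fun t => normv (fun i => rf i t)) _ (normv rv) Ls _ HSm HSm0 (rd_of_dpl _ _ _ HN HN0)).
  split; last first.
    by move=> Hz'; exfalso; apply: Hz.
  rewrite -/rv -/a -Hlin.
  have Hsum : \big[Rplus/R0]_(i < m) (a i * rv i + rv i * a i)
      = 2 * dotv rv (fun i => rv i + a i) - 2 * D.
    rewrite /D /dotv (@bsum_ext _ _ _ (fun i => 2 * (rv i * (rv i + a i)) + (-2) * (rv i * rv i))); last by move=> i; ring.
    rewrite bsum_add !bsum_scal.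
set X := \big[Rplus/R0]_(i < m) (rv i * (rv i + a i)); set Y := \big[Rplus/R0]_(i < m) (rv i * rv i); lra.
  rewrite Hsum.
  have Hcs := cs _ rv (fun i => rv i + a i).
  have HsD : sqrt D * sqrt D = D by apply: sqrt_sqrt; lra.
  have HsDp : 0 < sqrt D by apply: sqrt_lt_R0.
  rewrite -[normv rv]/(sqrt D) in Hcs *.
  set C := dotv rv _ in Hcs *.
  set nq := normv _ in Hcs *.
  set sD := sqrt D in HsD HsDp Hcs *.
  have -> : / (2 * sD) * (2 * C - 2 * D) = (C - D) / sD by field; lra.
  have : (nq - sD) - (C - D) / sD = (sD * nq - C) / sD.
    rewrite -HsD; field; lra.
  have : 0 <= (sD * nq - C) / sD.
    apply: Rmult_le_pos; first lra.
    by apply: Rlt_le; apply: Rinv_0_lt_compat.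
  lra.
Qed.
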